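(* Let $K\subset\mathbb R^n$ be a convex body with $rB_2^n\subset K$ for some $r\in(0,1]$. Let $N=N(K,B_2^n)$ and let $x_1,\dots,x_N\in\mathbb R^n$ satisfy $K\subset\bigcup_{i=1}^N(x_i+B_2^n)$. For $\varepsilon\in(0,1)$ let $A_\varepsilon=\{\theta\in S^{n-1}:|\langle\hat x_i,\theta\rangle|\le\varepsilon$ for all $i$ with $x_i\ne0\}$, where $\hat x=x/|x|$. Then for every $\theta\in A_\varepsilon$ and every outer unit normal $u$ of $K$ at the boundary point $\rho_K(\theta)\theta$, one has \[ \langle u,\theta\rangle\ge r\sqrt{1-\varepsilon^2}. \]
   Context: A convex body is a compact convex set with nonempty interior. $B_2^n$ is the closed Euclidean unit ball, $S^{n-1}$ the unit sphere. The covering number is $N(K,T)=\min\{N:\exists x_1,\dots,x_N\in\mathbb R^n,\ K\subset\bigcup_{i=1}^N(x_i+T)\}$. The radial function is $\rho_K(\theta)=\sup\{t\ge0:t\theta\in K\}$. For $x\in\partial K$, an outer unit normal of $K$ at $x$ is a vector $u\in S^{n-1}$ with $\langle u,x\rangle=h_K(u):=\sup_{y\in K}\langle y,u\rangle$ (the set of these is the normal cone $n_K(x)$). *)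

(* Defs.v *)
From HB Require Import structures.
From mathcomp Require Import all_boot all_order all_algebra.
From mathcomp Require Import all_classical all_reals all_analysis.
Set Implicit Arguments. Unset Strict Implicit. Unset Printing Implicit Defensive.
Import Order.TTheory GRing.Theory Num.Theory.
Import numFieldNormedType.Exports.
Local Open Scope classical_set_scope.
Local Open Scope ring_scope.

Section Defs.
Variables (R : realType) (n : nat).
Notation vec := 'rV[R]_n.

Definition dotp (u v : vec) : R := \sum_(i < n) u 0 i * v 0 i.
Definition enorm (u : vec) : R := Num.sqrt (dotp u u).

Definition unit_ball : set vec := [set x | enorm x <= 1].
Definition unit_sphere : set vec := [set x | enorm x = 1].

Definition convex_set (K : set vec) : Prop :=
  forall x y (t : R), K x -> K y -> 0 <= t <= 1 -> K (t *: x + (1 - t) *: y).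
Definition convex_body (K : set vec) : Prop :=
  compact K /\ convex_set K /\ (K^°) !=set0.

Definition covers (K : set vec) (N : nat) (x : 'I_N -> vec) : Prop :=
  forall y, K y -> exists i : 'I_N, enorm (y - x i) <= 1.

Definition is_covering_number (K : set vec) (N : nat) : Prop :=
  (exists x : 'I_N -> vec, covers K x) /\
  (forall (M : nat) (x : 'I_M -> vec), covers K x -> (N <= M)%N).

Definition radial (K : set vec) (theta : vec) : R :=
  sup [set t : R | 0 <= t /\ K (t *: theta)].

Definition support_fun (K : set vec) (u : vec) : R :=
  sup [set dotp y u | y in K].

Definition outer_unit_normal (K : set vec) (x u : vec) : Prop :=
  unit_sphere u /\ dotp u x = support_fun K u.

Definition unitize (x : vec) : vec := (enorm x)^-1 *: x.

Definition A_eps (N : nat) (x : 'I_N -> vec) (eps : R) : set vec :=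
  [set theta | unit_sphere theta /\
     forall i : 'I_N, x i != 0 -> `|dotp (unitize (x i)) theta| <= eps].

End Defs.

(* Main.v *)
Require Import Defs.
From HB Require Import structures.
From mathcomp Require Import all_boot all_order all_algebra.
From mathcomp Require Import all_classical all_reals all_analysis.
From mathcomp Require Import ring lra.
Import Order.TTheory GRing.Theory Num.Theory.
Import numFieldNormedType.Exports.
Local Open Scope classical_set_scope.
Local Open Scope ring_scope.

Section H.
Variables (R : realType) (n : nat).
Implicit Types u v w : 'rV[R]_n.

Lemma dotpC u v : dotp u v = dotp v u.
Proof. by apply: eq_bigr => i _; rewrite mulrC. Qed.

Lemma dotpZl a u v : dotp (a *: u) v = a * dotp u v.
Proof. rewrite /dotp mulr_sumr; apply: eq_bigr => i _; by rewrite mxE mulrA. Qed.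

Lemma dotpDl u v w : dotp (u + v) w = dotp u w + dotp v w.
Proof. rewrite /dotp -big_split; apply: eq_bigr => i _; by rewrite mxE mulrDl. Qed.

Lemma dotpNl u v : dotp (- u) v = - dotp u v.
Proof. rewrite /dotp -sumrN; apply: eq_bigr => i _; by rewrite mxE mulNr. Qed.

Lemma dotpDr u v w : dotp w (u + v) = dotp w u + dotp w v.
Proof. by rewrite !(dotpC w) dotpDl. Qed.
Lemma dotpNr u v : dotp v (- u) = - dotp v u.
Proof. by rewrite !(dotpC v) dotpNl. Qed.
Lemma dotpZr a u v : dotp v (a *: u) = a * dotp v u.
Proof. by rewrite !(dotpC v) dotpZl. Qed.

Lemma dotp_ge0 u : 0 <= dotp u u.
Proof. by apply: sumr_ge0 => i _; rewrite -expr2 sqr_ge0. Qed.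

Lemma enorm_sq u : enorm u ^+ 2 = dotp u u.
Proof. by rewrite /enorm sqr_sqrtr // dotp_ge0. Qed.

Lemma enorm_ge0 u : 0 <= enorm u.
Proof. exact: sqrtr_ge0. Qed.

Lemma dotp_le1 u : enorm u <= 1 -> dotp u u <= 1.
Proof.
move=> h; rewrite -enorm_sq; have := enorm_ge0 u; nra.
Qed.

Lemma dotp_half u v : 2 * dotp u v <= dotp u u + dotp v v.
Proof.
have := dotp_ge0 (u - v).
rewrite !dotpDl !dotpNl !dotpDr !dotpNr (dotpC v u); lra.
Qed.
End H.
Arguments dotp_le1 {R n u}.
Arguments dotp_half {R n}.
Arguments dotp_ge0 {R n}.
Arguments dotpC {R n}. Arguments dotpZl {R n}. Arguments dotpZr {R n}. Arguments dotpDl {R n}. Arguments dotpDr {R n}. Arguments dotpNl {R n}. Arguments dotpNr {R n}. Arguments enorm_sq {R n}. Arguments enorm_ge0 {R n}.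

Theorem proposition2p4 (R : realType) (n : nat) (K : set 'rV[R]_n) (r : R)
  (N : nat) (x : 'I_N -> 'rV[R]_n) (eps : R) :
  convex_body K ->
  0 < r <= 1 ->
  (forall y : 'rV[R]_n, enorm y <= r -> K y) ->
  is_covering_number K N ->
  covers K x ->
  0 < eps < 1 ->
  forall theta : 'rV[R]_n, A_eps x eps theta ->
  forall u : 'rV[R]_n, outer_unit_normal K (radial K theta *: theta) u ->
  r * Num.sqrt (1 - eps ^+ 2) <= dotp u theta.
Proof.
move=> _ /andP[r0 r1] rB _ cov /andP[e0 e1] theta [th1 thA] u [u1 hu].
have tt : dotp theta theta = 1 by rewrite -enorm_sq th1 expr1n.
have uu : dotp u u = 1 by rewrite -enorm_sq u1 expr1n.
set s := Num.sqrt (1 - eps ^+ 2).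
have s0 : 0 < s by rewrite sqrtr_gt0; nra.
have ss : s ^+ 2 = 1 - eps ^+ 2 by rewrite sqr_sqrtr //; nra.
set S := [set t : R | 0 <= t /\ K (t *: theta)].
have key : forall t, S t -> t * s <= 1.
  move=> t [t0 Kt]; have [i hi] := cov _ Kt.
  have := dotp_le1 hi.
  rewrite !dotpDl !dotpNl !dotpDr !dotpNr.
  rewrite !dotpZl !dotpZr !(dotpC theta (x i)) tt => hq.
  have : (t * s) ^+ 2 <= 1.
    rewrite exprMn ss.
    have [xi0|xin0] := eqVneq (x i) 0.
      have hz : dotp (x i) theta = 0 by rewrite xi0 -(scale0r (0 : 'rV[R]_n)) dotpZl mul0r.
      have : 0 <= dotp (x i) (x i) by apply: dotp_ge0.
      nra.
    have := thA i xin0; rewrite /unitize dotpZl.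
    set a := enorm (x i).
    have a2 : a ^+ 2 = dotp (x i) (x i) by rewrite enorm_sq.
    have a0 : 0 < a.
      rewrite lt_neqAle enorm_ge0 andbT eq_sym; apply/negP => /eqP a0'.
      move: xin0; apply/negP; rewrite negbK.
      have : dotp (x i) (x i) = 0 by rewrite -a2 a0' expr0n.
      rewrite /dotp => /eqP; rewrite psumr_eq0; last by move=> j _; rewrite -expr2 sqr_ge0.
      move=> /allP H; apply/eqP/rowP => j; rewrite mxE.
      by have := H j (mem_index_enum j); rewrite -expr2 sqrf_eq0 => /eqP.
    rewrite normrM ger0_norm ?invr_ge0 ?enorm_ge0 // => hd.
    have hd' : `|dotp (x i) theta| <= eps * a.
      by rewrite -ler_pdivrMr // mulrC.
    have := ler_norm (dotp (x i) theta).
    have : 0 <= (a - t * eps) ^+ 2 by apply: sqr_ge0.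
    nra.
  have : 0 <= t * s by apply: mulr_ge0 => //; apply: ltW.
  nra.
have Sr : S r.
  split; first exact: ltW.
  apply: rB; rewrite /enorm dotpZl dotpZr tt mulr1.
  by rewrite -expr2 sqrtr_sqr ger0_norm // ltW.
have ubS : ubound S (s^-1) by move=> t /key ht; rewrite -[s^-1]div1r ler_pdivlMr.
have rho_ub : radial K theta * s <= 1.
  rewrite -ler_pdivlMr // div1r; apply: ge_sup => //; by exists r.
have rho_r : r <= radial K theta.
  by apply: sup_upper_bound => //; split; [exists r | exists s^-1].
set M := 1 + \sum_(i < N) `|dotp (x i) u|.
have hs : r <= support_fun K u.
  apply: sup_upper_bound; last first.
    exists (r *: u); first apply: rB.
      by rewrite /enorm dotpZl dotpZr uu mulr1 -expr2 sqrtr_sqr ger0_norm // ltW.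
    by rewrite dotpZl uu mulr1.
  split; first by exists (dotp 0 u), 0 => //; apply: rB; rewrite /enorm -(scale0r (0 : 'rV[R]_n)) dotpZl mul0r sqrtr0 ltW.
  exists M => _ [y Ky <-].
  have [i hi] := cov _ Ky.
  have h1 := dotp_le1 hi.
  have h2 := dotp_half (y - x i) u.
  have -> : y = (y - x i) + x i by rewrite subrK.
  rewrite dotpDl /M.
  have : dotp (x i) u <= \sum_(j < N) `|dotp (x j) u|.
    apply: le_trans (ler_norm _) _.
    rewrite (bigD1 i) //= lerDl; apply: sumr_ge0 => j _; exact: normr_ge0.
  lra.
rewrite -hu dotpZr in hs.
set rho := radial K theta in rho_ub rho_r hs.
set d := dotp u theta in hs *.
have rho0 : 0 < rho by apply: lt_le_trans rho_r.
have d0 : 0 <= d.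
  rewrite leNgt; apply/negP => dn.
  have : rho * d < 0 by rewrite pmulr_rlt0.
  by move=> /(le_lt_trans hs) /(lt_trans r0); rewrite ltxx.
have : r * s <= rho * d * s by rewrite ler_pM2r.
move/le_trans; apply.
by rewrite mulrAC ler_piMl.
Qed.
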